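(* Let $H(u)=\sum_{n\ge0}\mathbf h_nu^n$, and for $k\ge0$ let $\prod^{\leftarrow}_{0\le j\le k}H(q^j)=H(q^k)H(q^{k-1})\cdots H(q^0)$. Then, as an identity with coefficients in $\mathbb Q[[q,t]]$, \[ \sum_{k\ge0}t^k\,H(q^k)H(q^{k-1})\cdots H(1)=\sum_{n\ge0}\frac{\sum_{L\vDash n}t^{\mathrm{des}(L)}q^{\mathrm{maj}(L)}\mathbf r_L}{(1-t)(1-tq)\cdots(1-tq^n)}, \] where for a nonempty composition $L=(L_1,\dots,L_k)$, $\mathrm{des}(L)=k-1$ and $\mathrm{maj}(L)=(k-1)L_1+(k-2)L_2+\cdots+L_{k-1}$, and for the empty composition $\mathrm{des}=\mathrm{maj}=0$ and $\mathbf r_\emptyset=1$.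
   Context: Work in formal power series in noncommuting variables $X_1,X_2,\dots$ with coefficients in $\mathbb Q[[q,t]]$ ($q,t$ commuting indeterminates commuting with the $X_i$). $\mathbf h_n=\sum_{i_1\le\cdots\le i_n}X_{i_1}\cdots X_{i_n}$, $\mathbf h_0=1$. $L\vDash n$ means $L$ is a composition of $n$. For $L=(L_1,\dots,L_k)\vDash n$, $\mathbf r_L=\sum X_{i_1}\cdots X_{i_n}$ over $(i_1,\dots,i_n)$ with $i_1\le\cdots\le i_{L_1}>i_{L_1+1}\le\cdots\le i_{L_1+L_2}>\cdots>i_{L_1+\cdots+L_{k-1}+1}\le\cdots\le i_n$. *)

(* Defs.v *)
From HB Require Import structures.
From mathcomp Require Import all_boot all_order all_algebra.
Set Implicit Arguments. Unset Strict Implicit. Unset Printing Implicit Defensive.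
Import Order.TTheory GRing.Theory Num.Theory.
Local Open Scope ring_scope.

(* f a b = coefficient of q^a t^b in f. *)
Definition ps := nat -> nat -> rat.

Definition psmul (f g : ps) : ps := fun a b =>
  \sum_(i < a.+1) \sum_(j < b.+1) f i j * g (a - i)%N (b - j)%N.

Definition ps1 : ps := fun a b => if (a == 0%N) && (b == 0%N) then 1 else 0.

Definition mono (a0 b0 : nat) : ps := fun a b =>
  if (a == a0) && (b == b0) then 1 else 0.

(* 1/(1 - t q^j), expanded as the geometric series sum_m (t q^j)^m *)
Definition geom (j : nat) : ps := fun a b => if a == (j * b)%N then 1 else 0.

Definition denom_inv (n : nat) : ps := foldr psmul ps1 [seq geom j | j <- iota 0 n.+1].

(* A word X_{i_1}...X_{i_m} is the sequence [:: i_1; ...; i_m] (letters i >= 1);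
   F w is the coefficient (in Q[[q,t]]) of the word w in F. *)
Definition ncs := seq nat -> ps.

Definition ncmul (F G : ncs) : ncs := fun w a b =>
  \sum_(i < (size w).+1) psmul (F (take i w)) (G (drop i w)) a b.

Definition ncscale (c : ps) (F : ncs) : ncs := fun w => psmul c (F w).

Definition sums_to (F : nat -> ncs) (S : ncs) : Prop :=
  forall w a b, exists N, forall M, (N <= M)%N ->
    \sum_(n < M) F n w a b = S w a b.

Definition letters_pos (w : seq nat) : bool := all (fun i => 0 < i)%N w.

(* h_n = sum_{i_1 <= ... <= i_n} X_{i_1} ... X_{i_n} *)
Definition hser (n : nat) : ncs := fun w =>
  if [&& size w == n, sorted leq w & letters_pos w] then ps1 else (fun _ _ => 0).

Definition Hterm (k n : nat) : ncs := ncscale (mono (k * n) 0) (hser n).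

Fixpoint prodH (Hs : nat -> ncs) (k : nat) : ncs :=
  match k with
  | 0 => Hs 0%N
  | k'.+1 => ncmul (Hs k) (prodH Hs k')
  end.

Definition LHSterm (Hs : nat -> ncs) (k : nat) : ncs := ncscale (mono 0 k) (prodH Hs k).

Fixpoint comps_aux (fuel n : nat) : seq (seq nat) :=
  match fuel with
  | 0 => if n == 0%N then [:: [::]] else [::]
  | fuel'.+1 =>
      if n == 0%N then [:: [::]]
      else flatten [seq [seq i :: c | c <- comps_aux fuel' (n - i)] | i <- iota 1 n]
  end.

(* all compositions L of n (each exactly once), L = (L_1,...,L_k), L_i >= 1 *)
Definition comps (n : nat) : seq (seq nat) := comps_aux n n.

Definition des (L : seq nat) : nat := (size L).-1.

Definition maj (L : seq nat) : nat :=
  \sum_(j < (size L).-1) (((size L).-1 - j) * nth 0 L j)%N.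

Definition bounds (L : seq nat) : seq nat :=
  [seq sumn (take j L) | j <- iota 1 (size L).-1].

(* w occurs (with coefficient 1) in r_L: i_1<=...<=i_{L_1} > i_{L_1+1} <= ... *)
Definition ribbon_ok (L : seq nat) (w : seq nat) : bool :=
  [&& size w == sumn L, letters_pos w &
   all (fun p => if p.+1 \in bounds L
                 then (nth 0 w p.+1 < nth 0 w p)%N
                 else (nth 0 w p <= nth 0 w p.+1)%N)
       (iota 0 (size w).-1)].

Definition rser (L : seq nat) : ncs := fun w =>
  if ribbon_ok L w then ps1 else (fun _ _ => 0).

Definition numer (n : nat) : ncs := fun w a b =>
  \sum_(L <- comps n) psmul (mono (maj L) (des L)) (rser L w) a b.

Definition RHSterm (n : nat) : ncs := ncscale (denom_inv n) (numer n).

(* Main.v *)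
Require Import Defs.
From HB Require Import structures.
From mathcomp Require Import all_boot all_order all_algebra.
From mathcomp Require Import zify.
From Stdlib Require Import FunctionalExtensionality.
Set Implicit Arguments. Unset Strict Implicit. Unset Printing Implicit Defensive.
Import Order.TTheory GRing.Theory Num.Theory.
Local Open Scope ring_scope.

Definition PT := {poly {poly rat}}.
Definition rep (N : nat) (f : ps) (p : PT) :=
  forall i j, (i < N)%N -> (j < N)%N -> f i j = (p`_j)`_i.

Lemma mul_coef (p r : PT) a b :
  ((p * r)`_b)`_a = \sum_(i < a.+1) \sum_(j < b.+1) (p`_j)`_i * (r`_(b - j))`_(a - i).
Proof.
rewrite coefM coef_sum exchange_big /=; apply: eq_bigr => j _.
by rewrite coefM.
Qed.

Lemma rep_mul N f g p r : rep N f p -> rep N g r -> rep N (psmul f g) (p * r).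
Proof.
move=> hf hg i j hi hj; rewrite mul_coef /psmul; apply: eq_bigr => i' _.
apply: eq_bigr => j' _.
have hi' : (i' < N)%N by apply: leq_ltn_trans hi; rewrite -ltnS.
have hj' : (j' < N)%N by apply: leq_ltn_trans hj; rewrite -ltnS.
rewrite hf // hg //; [exact: leq_ltn_trans (leq_subr _ _) hi|exact: leq_ltn_trans (leq_subr _ _) hj].
Qed.

Definition emb N (f : ps) : PT := \poly_(j < N) \poly_(i < N) f i j.

Lemma rep_emb N f : rep N f (emb N f).
Proof. by move=> i j hi hj; rewrite /emb coef_poly hj coef_poly hi. Qed.
Arguments rep_emb : clear implicits.

Lemma psmulA f g h : psmul (psmul f g) h = psmul f (psmul g h).
Proof.
apply: functional_extensionality => a; apply: functional_extensionality => b.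
set N := (maxn a b).+1.
have ha : (a < N)%N by rewrite ltnS leq_maxl.
have hb : (b < N)%N by rewrite ltnS leq_maxr.
rewrite (rep_mul (rep_mul (rep_emb N f) (rep_emb N g)) (rep_emb N h)) //.
by rewrite (rep_mul (rep_emb N f) (rep_mul (rep_emb N g) (rep_emb N h))) // mulrA.
Qed.

Lemma psmulC f g : psmul f g = psmul g f.
Proof.
apply: functional_extensionality => a; apply: functional_extensionality => b.
set N := (maxn a b).+1.
have ha : (a < N)%N by rewrite ltnS leq_maxl.
have hb : (b < N)%N by rewrite ltnS leq_maxr.
rewrite (rep_mul (rep_emb N f) (rep_emb N g)) //.
by rewrite (rep_mul (rep_emb N g) (rep_emb N f)) // mulrC.
Qed.

Definition sig (p : PT) : PT := \poly_(j < size p) (p`_j * 'X^j).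

Lemma sig_coef p j : (sig p)`_j = p`_j * 'X^j.
Proof.
rewrite /sig coef_poly; case: ltnP => // h.
by rewrite nth_default // mul0r.
Qed.

Lemma sigM p r : sig (p * r) = sig p * sig r.
Proof.
apply/polyP => b; rewrite sig_coef !coefM big_distrl /=.
apply: eq_bigr => j _; rewrite !sig_coef mulrACA -exprD subnKC //.
by rewrite -ltnS.
Qed.

Definition sh (f : ps) : ps := fun a b => if (b <= a)%N then f (a - b)%N b else 0.

Lemma rep_sh N f p : rep N f p -> rep N (sh f) (sig p).
Proof.
move=> hf i j hi hj; rewrite /sh sig_coef coefMXn.
case: leqP => h; last by [].
rewrite hf //; exact: leq_ltn_trans (leq_subr _ _) hi.
Qed.

Lemma sh_mul f g : psmul (sh f) (sh g) = sh (psmul f g).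
Proof.
apply: functional_extensionality => a; apply: functional_extensionality => b.
set N := (maxn a b).+1.
have ha : (a < N)%N by rewrite ltnS leq_maxl.
have hb : (b < N)%N by rewrite ltnS leq_maxr.
rewrite (rep_mul (rep_sh (rep_emb N f)) (rep_sh (rep_emb N g))) // -sigM.
by rewrite (rep_sh (rep_mul (rep_emb N f) (rep_emb N g))).
Qed.

Lemma sum_single_in n k (G : 'I_n -> rat) (hk : (k < n)%N) :
  (forall i : 'I_n, (i : nat) != k -> G i = 0) -> \sum_i G i = G (Ordinal hk).
Proof.
move=> hF; rewrite (bigD1 (Ordinal hk)) //= big1 ?addr0 // => i hi; apply: hF.
Qed.

Lemma sum_single_out n k (G : 'I_n -> rat) : (n <= k)%N ->
  (forall i : 'I_n, (i : nat) != k -> G i = 0) -> \sum_i G i = 0.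
Proof.
move=> hk hF; rewrite big1 // => i _; apply: hF.
by rewrite neq_ltn (leq_trans (ltn_ord i) hk).
Qed.

Definition zps : ps := fun _ _ => 0.

Lemma psmul_mono_l p d X a b :
  psmul (mono p d) X a b = if (p <= a)%N && (d <= b)%N then X (a - p)%N (b - d)%N else 0.
Proof.
rewrite /psmul; case: (leqP p a) => hp /=; last first.
  apply: sum_single_out hp _ => i hi; rewrite big1 // => j _.
  by rewrite /mono (negbTE hi) /= mul0r.
have hp' : (p < a.+1)%N by [].
rewrite (sum_single_in hp'); last first.
  move=> i hi; rewrite big1 // => j _; rewrite /mono (negbTE hi) /= mul0r //.
rewrite /=; case: (leqP d b) => hd /=; last first.
  apply: sum_single_out hd _ => j hj.
  by rewrite /mono eqxx (negbTE hj) /= mul0r.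
have hd' : (d < b.+1)%N by [].
rewrite (sum_single_in hd'); last by move=> j hj; rewrite /mono eqxx (negbTE hj) mul0r.
by rewrite /mono !eqxx mul1r.
Qed.

Lemma psmul_0_r f : psmul f zps = zps.
Proof.
apply: functional_extensionality => a; apply: functional_extensionality => b.
by rewrite /psmul big1 // => i _; rewrite big1 // => j _; rewrite mulr0.
Qed.

Lemma ps1_mono : ps1 = mono 0 0.
Proof. by []. Qed.

Lemma psmul_1_r f : psmul f ps1 = f.
Proof.
apply: functional_extensionality => a; apply: functional_extensionality => b.
by rewrite psmulC ps1_mono psmul_mono_l /= !subn0.
Qed.

Lemma psmul_geom0 Y a b :
  psmul (geom 0) Y a b = (if b is b'.+1 then psmul (geom 0) Y a b' else 0) + Y a b.
Proof.
have E : forall c, psmul (geom 0) Y a c = \sum_(j < c.+1) Y a (c - j)%N.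
  move=> c; rewrite /psmul (sum_single_in (ltn0Sn a)); last first.
    by move=> i hi; rewrite big1 // => j _; rewrite /geom mul0n (negbTE hi) mul0r.
  by apply: eq_bigr => j _; rewrite /geom /= mul1r subn0.
case: b => [|b]; first by rewrite E big_ord1 add0r.
by rewrite !E big_ord_recl subn0 addrC.
Qed.

Lemma sh_ps1 : sh ps1 = ps1.
Proof.
apply: functional_extensionality => a; apply: functional_extensionality => b.
rewrite /sh /ps1; case: b => [|b]; first by rewrite subn0.
have -> : (b.+1 == 0%N) = false by [].
by case: leqP => h; rewrite !andbF.
Qed.

Lemma sh_geom j : sh (geom j) = geom j.+1.
Proof.
apply: functional_extensionality => a; apply: functional_extensionality => b.
rewrite /sh /geom; case: leqP => h.
  have -> : (a - b == j * b)%N = (a == j.+1 * b)%N by apply/eqP/eqP; lia.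
  by [].
have -> : (a == j.+1 * b)%N = false by apply/negbTE/eqP; lia.
by [].
Qed.

Lemma foldr_shift l :
  foldr psmul ps1 [seq geom j | j <- map succn l] = sh (foldr psmul ps1 [seq geom j | j <- l]).
Proof.
elim: l => [|j l IH] /=; first by rewrite sh_ps1.
by rewrite IH -sh_geom sh_mul.
Qed.

Lemma denom_inv_S n : denom_inv n.+1 = psmul (geom 0) (sh (denom_inv n)).
Proof.
rewrite /denom_inv -foldr_shift.
have -> : iota 0 n.+2 = 0%N :: map succn (iota 0 n.+1).
  have -> : map succn (iota 0 n.+1) = map (addn 1) (iota 0 n.+1).
    by apply: eq_map => i; rewrite add1n.
  by rewrite -iotaDl.
by [].
Qed.

Lemma denom_inv_0 : denom_inv 0 = geom 0.
Proof. by rewrite /denom_inv /= psmul_1_r. Qed.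

Definition Hs (k : nat) : ncs := fun w => psmul (mono (k * size w) 0) (hser (size w) w).

Lemma Hs_val k w a c : Hs k w a c =
  if [&& sorted leq w, letters_pos w, a == (k * size w)%N & c == 0%N] then 1 else 0.
Proof.
rewrite /Hs psmul_mono_l /hser eqxx /= subn0.
case: (sorted leq w); case: (letters_pos w) => /=; case: leqP => h //=.
- rewrite /ps1; have -> : ((a - k * size w)%N == 0%N) = (a == (k * size w)%N).
    by apply/eqP/eqP; lia.
  by [].
- have -> : (a == (k * size w)%N) = false by apply/negbTE/eqP; lia.
  by [].
Qed.

Definition tz (f : ps) := forall a c, (0 < c)%N -> f a c = 0.

Lemma tz_mul f g : tz f -> tz g -> tz (psmul f g).
Proof.
move=> hf hg a c hc; rewrite /psmul big1 // => i _; rewrite big1 // => j _.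
case: (posnP j) => hj; last by rewrite hf // mul0r.
by rewrite hj hg ?mulr0 // subn0.
Qed.

Lemma tz_Hs k w : tz (Hs k w).
Proof. by move=> a c hc; rewrite Hs_val; case: c hc => //= c _; rewrite !andbF. Qed.

Lemma tz_prodH k w : tz (prodH Hs k w).
Proof.
elim: k w => [|k IH] w /=; first exact: tz_Hs.
move=> a c hc; rewrite /ncmul big1 // => i _; exact: tz_mul (tz_Hs _ _) (IH _) _ _ hc.
Qed.

Lemma prodH_S k w a : prodH Hs k.+1 w a 0 =
  \sum_(i < (size w).+1) (if [&& sorted leq (take i w), letters_pos (take i w) & (k.+1 * i <= a)%N]
     then prodH Hs k (drop i w) (a - k.+1 * i)%N 0 else 0).
Proof.
rewrite [LHS]/= /ncmul; apply: eq_bigr => i _.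
have hsz : size (take i w) = i by rewrite size_takel // -ltnS.
rewrite /psmul.
under eq_bigr => i' _ do rewrite big_ord1 /= Hs_val hsz subnn eqxx andbT.
case: (sorted leq (take i w)); case: (letters_pos (take i w)) => /=;
  try by rewrite big1 // => i' _; rewrite mul0r.
case: (leqP (k.+1 * i) a) => h.
  have h' : (k.+1 * i < a.+1)%N by [].
  rewrite (sum_single_in h') /= ?eqxx ?mul1r //.
  by move=> i' hi'; rewrite (negbTE hi') mul0r.
apply: sum_single_out h _ => i' hi'; by rewrite (negbTE hi') mul0r.
Qed.

Lemma prodH_0 w a : prodH Hs 0 w a 0 =
  if [&& sorted leq w, letters_pos w & a == 0%N] then 1 else 0.
Proof. by rewrite /= Hs_val mul0n eqxx andbT. Qed.

Arguments prodH : simpl never.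

Definition ed (x : nat) (w : seq nat) : nat :=
  if w is y :: _ then (if (y < x)%N then 1%N else 0%N) else 0%N.

Definition Rec (X : seq nat -> ps) :=
  (forall a b, X [::] a b = if a == 0%N then 1 else 0) /\
  (forall x w a b, X (x :: w) a b =
     (if b is b'.+1 then X (x :: w) a b' else 0) +
     (if [&& (0 < x)%N, (ed x w <= b)%N & (b <= a)%N]
      then X w (a - b)%N (b - ed x w)%N else 0)).

Lemma Rec_uniq X Y : Rec X -> Rec Y -> forall w a b, X w a b = Y w a b.
Proof.
move=> [hX0 hX1] [hY0 hY1]; elim=> [|x w IH] a b; first by rewrite hX0 hY0.
elim: b a => [|b IHb] a; rewrite hX1 hY1 ?IHb; by rewrite IH.
Qed.

Definition Sf : seq nat -> ps := fun w a b => prodH Hs b w a 0.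

Lemma S_nil k a : prodH Hs k [::] a 0 = if a == 0%N then 1 else 0.
Proof.
elim: k a => [|k IH] a; first by rewrite prodH_0.
by rewrite prodH_S big_ord1 /= muln0 subn0 IH.
Qed.

Lemma sorted_cons_take x y w' i : (x <= y)%N ->
  path leq x (take i (y :: w')) = sorted leq (take i (y :: w')).
Proof. by case: i => [|i] //= ->. Qed.

Lemma S_Rec : Rec Sf.
Proof.
split; first by move=> a b; rewrite /Sf S_nil.
move=> x w a [|k].
  rewrite /Sf prodH_0 add0r subn0 sub0n.
  case: w => [|y w'].
    by rewrite prodH_0 /=; case: (0 < x)%N.
  rewrite prodH_0 /ed; case: (ltnP y x) => hyx.
    rewrite /= leqNgt hyx /=; by rewrite andbF.
  rewrite /=; move: hyx => -> /=; by case: (0 < x)%N; rewrite ?andbF.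
rewrite /Sf prodH_S big_ord_recl /= muln0 subn0; congr (_ + _).
under eq_bigr => i _ do rewrite /bump leq0n add0n add1n.
case: w => [|y w'].
  by rewrite big_ord1 (_ : drop 0 [::] = [::]) // !S_nil /= muln1 andbT.
rewrite /ed; case: (ltnP y x) => hyx.
  rewrite big_ord_recl /= muln1 subn1 /= andbT.
  rewrite big1 ?addr0 //.
  move=> i _; rewrite /= (leqNgt x y) hyx; by [].
rewrite subn0 prodH_S /=.
case: (boolP ((0 < x)%N && (k < a)%N)) => h.
  apply: eq_bigr => i _; move/andP: h => [hx ha].
  rewrite sorted_cons_take // hx /=.
  have -> : (k.+1 * i.+1 <= a)%N = (k.+1 * i <= a - k.+1)%N by apply/idP/idP; lia.
  by have -> : (a - k.+1 * i.+1 = a - k.+1 - k.+1 * i)%N by lia.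
rewrite big1 // => i _.
case: (boolP (0 < x)%N) => hx /=; last by rewrite andbF.
case: (boolP (k.+1 * i.+1 <= a)%N) => hi; last by rewrite !andbF.
by exfalso; move: h; rewrite hx /= -leqNgt => h; lia.
Qed.

Definition incr_head (L : seq nat) := if L is h :: t then h.+1 :: t else [:: 1%N].

Fixpoint dc (v : seq nat) : seq nat :=
  match v with
  | [::] => [::]
  | x :: w => match w with
              | [::] => [:: 1%N]
              | y :: _ => if (y < x)%N then 1%N :: dc w else incr_head (dc w)
              end
  end.

Definition iscomp n (L : seq nat) := (sumn L == n) && all (fun i => 0 < i)%N L.

Lemma comps_base (L : seq nat) : (L \in [:: [::]]) = iscomp 0 L.
Proof.
rewrite inE /iscomp; case: L => [|c L] //=.
by case: c => [|c] /=; rewrite ?andbF.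
Qed.

Lemma comps_aux_S f n : comps_aux f.+1 n.+1 =
  flatten [seq [seq i :: c | c <- comps_aux f (n.+1 - i)] | i <- iota 1 n.+1].
Proof. by []. Qed.

Lemma mem_comps_aux f n L : (n <= f)%N -> (L \in comps_aux f n) = iscomp n L.
Proof.
elim: f n L => [|f IH] n L hn.
  by move: hn; rewrite leqn0 => /eqP ->; exact: comps_base.
case: n hn => [|n] hn; first exact: comps_base.
rewrite comps_aux_S; apply/flatten_mapP/idP.
  move=> [i]; rewrite mem_iota => /andP [hi1 hi2] /mapP [c hc ->].
  rewrite IH in hc; last by lia.
  move: hc => /andP [/eqP hs ha]; rewrite /iscomp /= ha andbT.
  apply/andP; split; [apply/eqP; lia | lia].
case: L => [|c L]; rewrite /iscomp; first by [].
move=> /andP [/eqP hs /andP [hc ha]].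
have {hs} hs : (c + sumn L = n.+1)%N by [].
have {ha} ha : all (fun i => 0 < i)%N L by [].
exists c; first by rewrite mem_iota; lia.
apply/mapP; exists L => //; rewrite IH; last by lia.
by rewrite /iscomp ha andbT; apply/eqP; lia.
Qed.

Lemma uniq_flatten_cons (s : seq nat) (C : nat -> seq (seq nat)) :
  uniq s -> (forall i, uniq (C i)) -> uniq (flatten [seq [seq i :: c | c <- C i] | i <- s]).
Proof.
elim: s => [|i s IH] //= /andP [his us] hC.
rewrite cat_uniq; apply/and3P; split.
- rewrite map_inj_uniq //; by move=> c1 c2 [].
- apply/hasPn => L /flatten_mapP [j hj /mapP [c _ ->]].
  apply/mapP => [[c' _ [ej _]]]; by move: his; rewrite -ej hj.
- exact: IH.
Qed.

Lemma uniq_comps_aux f n : uniq (comps_aux f n).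
Proof.
elim: f n => [|f IH] n /=; first by case: (n == 0%N).
case: (n == 0%N) => //; apply: uniq_flatten_cons => //; exact: iota_uniq.
Qed.

Lemma mem_comps n L : (L \in comps n) = iscomp n L.
Proof. exact: mem_comps_aux. Qed.

Lemma uniq_comps n : uniq (comps n).
Proof. exact: uniq_comps_aux. Qed.

Lemma bounds_cons c L :
  bounds (c :: L) = if L is [::] then [::] else c :: map (addn c) (bounds L).
Proof.
rewrite /bounds /=; case: L => [|d L] //=.
have -> : iota 2 (size L) = map (addn 1) (iota 1 (size L)) by rewrite -iotaDl.
by rewrite addn0 -!map_comp; congr (_ :: _); apply: eq_map => j /=.
Qed.

Lemma bounds_succ h t : bounds (h.+1 :: t) = map succn (bounds (h :: t)).
Proof.
rewrite !bounds_cons; case: t => [|d t] //=; rewrite -map_comp.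
by congr (_ :: _); apply: eq_map => p /=.
Qed.

Lemma zero_notin_bounds c L : (0 < c)%N -> (0%N \in bounds (c :: L)) = false.
Proof.
move=> hc; rewrite bounds_cons; case: L => [|d L] //; rewrite inE.
apply/negbTE/norP; split; first by rewrite eq_sym -lt0n.
by apply/mapP => [[p _ h]]; lia.
Qed.

Definition descP (P : nat -> bool) (v : seq nat) :=
  all (fun p => P p.+1 == (nth 0%N v p.+1 < nth 0%N v p)%N) (iota 0 (size v).-1).

Lemma ribbon_okE L v :
  ribbon_ok L v = [&& size v == sumn L, letters_pos v & descP (fun p => p \in bounds L) v].
Proof.
rewrite /ribbon_ok /descP; congr (_ && (_ && _)); apply: eq_all => p /=.
by case: (_ \in _); case: (ltnP (nth 0%N v p.+1) (nth 0%N v p)).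
Qed.

Lemma descP_cons P x w : descP P (x :: w) =
  (if w is y :: _ then P 1%N == (y < x)%N else true) && descP (fun p => P p.+1) w.
Proof.
rewrite /descP /=; case: w => [|y w] //=.
have -> : iota 1 (size w) = map succn (iota 0 (size w)).
  have -> : map succn (iota 0 (size w)) = map (addn 1) (iota 0 (size w)).
    by apply: eq_map => i; rewrite add1n.
  by rewrite -iotaDl.
by rewrite all_map.
Qed.

Lemma descP_ext P Q v : (forall p, P p.+1 = Q p.+1) -> descP P v = descP Q v.
Proof. by move=> h; apply: eq_all => p; rewrite h. Qed.

Lemma sumn_incr L : sumn (incr_head L) = (sumn L).+1.
Proof. by case: L. Qed.

Lemma all_incr L : all (fun i => 0 < i)%N L -> all (fun i => 0 < i)%N (incr_head L).
Proof. by case: L => //= h t /andP [_ ->]. Qed.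

Lemma dc_comp v : iscomp (size v) (dc v).
Proof.
elim: v => [|x w IH] //; case: w IH => [|y w'] IH //.
move: IH => /andP [/eqP hs ha].
rewrite [dc _]/=; case: (y < x)%N; rewrite /iscomp.
  by rewrite /= hs eqxx ha.
by rewrite sumn_incr hs eqxx all_incr.
Qed.

Lemma dc_ne y w : exists h t, dc (y :: w) = h :: t /\ (0 < h)%N.
Proof.
have := dc_comp (y :: w); case: (dc (y :: w)) => [|h t] /andP [/eqP hs ha] //.
by exists h, t; split => //; move: ha => /andP [].
Qed.

Lemma letters_pos_cons x w : letters_pos (x :: w) = (0 < x)%N && letters_pos w.
Proof. by []. Qed.

Lemma dc_cons2 x y w : dc (x :: y :: w) = if (y < x)%N then 1%N :: dc (y :: w) else incr_head (dc (y :: w)).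
Proof. by []. Qed.

Lemma ribbon_dc v L : iscomp (size v) L -> ribbon_ok L v = letters_pos v && (L == dc v).
Proof.
elim: v L => [|x w IH] L.
  case: L => [|c L] //; rewrite /iscomp /= => /andP [/eqP hs /andP [hc _]]; lia.
case: L => [|c L'] //; rewrite /iscomp => /andP [/eqP hs /andP [hc ha]].
have {hs} hs : (c + sumn L' = (size w).+1)%N by [].
have {ha} ha : all (fun i => 0 < i)%N L' by [].
rewrite ribbon_okE descP_cons.
case: w IH hs => [|y w'] IH hs.
  move: hs => /= hs; have hc1 : c = 1%N by lia.
  have hL : L' = [::].
    case: L' hs ha => [|d L''] //= hs /andP [hd _]; lia.
  by subst; rewrite /= andbT.
case: c hc hs => [|c] hc hs //.
case: c hc hs => [|h] hc hs.
  case: L' ha hs => [|d L''] ha hs; first by move: hs => /=; lia.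
  have R := IH (d :: L'').
  rewrite /iscomp ha andbT ribbon_okE in R.
  have hs2 : (sumn (d :: L'') == size (y :: w'))%N by apply/eqP; move: hs => /=; lia.
  move: (R hs2) => {}R.
  rewrite (eq_sym _ (sumn _)) hs2 in R.
  rewrite (descP_ext (Q := fun p => p \in bounds (d :: L''))); last first.
    move=> p; rewrite bounds_cons inE /=.
    rewrite -[p.+2]/(1 + p.+1)%N mem_map //; exact: addnI.
  rewrite bounds_cons inE eqxx orTb.
  have -> : (size (x :: y :: w') == sumn (1%N :: d :: L''))%N = true.
    by apply/eqP; move: hs => /=; lia.
  rewrite letters_pos_cons dc_cons2.
  case: (ltnP y x) => hyx.
    rewrite eqseq_cons eqxx.
    by move: R; case: (0 < x)%N; case: (letters_pos (y :: w'));
       case: (descP _ _); case: (_ == dc _).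
  have [h' [t [hdc hh']]] := dc_ne y w'.
  have hyx' : (y < x)%N = false by rewrite ltnNge hyx.
  rewrite hdc [incr_head _]/= eqseq_cons.
  have -> : (1%N == h'.+1) = false by apply/negbTE/eqP; lia.
  by rewrite !andbF.
have hbs : bounds (h.+2 :: L') = map succn (bounds (h.+1 :: L')) by rewrite bounds_succ.
have R := IH (h.+1 :: L').
have hall : all (fun i => 0 < i)%N (h.+1 :: L') by rewrite /= ha.
rewrite /iscomp hall andbT ribbon_okE in R.
have hs2 : (sumn (h.+1 :: L') == size (y :: w'))%N by apply/eqP; move: hs => /=; lia.
move: (R hs2) => {}R.
rewrite (eq_sym _ (sumn _)) hs2 in R.
rewrite (descP_ext (Q := fun p => p \in bounds (h.+1 :: L'))); last first.
  by move=> p; rewrite hbs mem_map //; exact: succn_inj.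
rewrite hbs (mem_map succn_inj) zero_notin_bounds //.
have -> : (size (x :: y :: w') == sumn (h.+2 :: L'))%N = true.
  by apply/eqP; move: hs => /=; lia.
rewrite letters_pos_cons dc_cons2.
case: (ltnP y x) => hyx.
  by rewrite eqseq_cons !andbF.
have [h' [t [hdc hh']]] := dc_ne y w'.
have hyx' : (y < x)%N = false by rewrite ltnNge hyx.
rewrite hdc in R.
rewrite hdc [incr_head _]/= eqseq_cons eqSS -eqseq_cons.
by move: R; case: (0 < x)%N; case: (letters_pos (y :: w'));
   case: (descP _ _); case: (_ == _).
Qed.

Lemma maj_nil : maj [::] = 0%N.
Proof. by rewrite /maj big_ord0. Qed.

Lemma maj_cons c L : maj (c :: L) = (size L * c + maj L)%N.
Proof.
case: L => [|d L]; first by rewrite /maj /= !big_ord0.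
rewrite /maj [size _]/= big_ord_recl subn0 /=.
congr (_ + _)%N; apply: eq_bigr => j _; by rewrite /bump /= add1n subSS.
Qed.

Lemma dc_stats x w :
  maj (dc (x :: w)) = (maj (dc w) + des (dc w) + ed x w)%N /\
  des (dc (x :: w)) = (des (dc w) + ed x w)%N.
Proof.
case: w => [|y w']; first by rewrite /= maj_cons maj_nil.
have [h [t [hdc hh]]] := dc_ne y w'.
rewrite dc_cons2 /ed hdc; case: (y < x)%N.
  rewrite !maj_cons /des /=; split; lia.
rewrite /= !maj_cons /des /=; split; lia.
Qed.

Lemma mono_shift M d e a b : mono (M + d + e) (d + e) a b =
  if (b <= a)%N && (e <= b)%N then mono M d (a - b)%N (b - e)%N else 0.
Proof.
rewrite /mono; case: (leqP b a) => hba; case: (leqP e b) => heb /=.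
- have -> : ((a == M + d + e) && (b == d + e))%N = ((a - b == M) && (b - e == d))%N.
    by apply/andP/andP => [[/eqP ? /eqP ?]|[/eqP ? /eqP ?]]; split; apply/eqP; lia.
  by [].
- have -> : (b == d + e)%N = false by apply/negbTE/eqP; lia.
  by rewrite andbF.
- have -> : ((a == M + d + e) && (b == d + e))%N = false.
    by apply/negbTE/andP => [[/eqP ? /eqP ?]]; lia.
  by [].
- have -> : (b == d + e)%N = false by apply/negbTE/eqP; lia.
  by rewrite andbF.
Qed.

Lemma rser_psmul c L v a b :
  psmul c (rser L v) a b = if ribbon_ok L v then c a b else 0.
Proof.
rewrite /rser; case: ifP => _; first by rewrite psmul_1_r.
by rewrite -/zps psmul_0_r.
Qed.

Lemma numer_val v a b :
  numer (size v) v a b = if letters_pos v then mono (maj (dc v)) (des (dc v)) a b else 0.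
Proof.
rewrite /numer big_seq.
under eq_bigr => L hL do
  rewrite rser_psmul (ribbon_dc (elimT idP (etrans (esym (mem_comps _ _)) hL))).
rewrite -big_seq; case: (letters_pos v) => /=; last by rewrite big1.
have hin : dc v \in comps (size v) by rewrite mem_comps dc_comp.
rewrite (big_rem _ hin) /= eqxx big1_seq ?addr0 // => L /andP [_ hL].
rewrite (mem_rem_uniq _ (uniq_comps _)) in hL.
by move: hL => /andP [/negbTE -> _].
Qed.

Lemma numer_zero n v a b : n != size v -> numer n v a b = 0.
Proof.
move=> hn; rewrite /numer big1_seq // => L /andP [_ hL].
rewrite rser_psmul; move: hL; rewrite mem_comps /iscomp => /andP [/eqP hs _].
suff -> : ribbon_ok L v = false by [].
rewrite /ribbon_ok (_ : (size v == sumn L) = false) //.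
by apply/negbTE; rewrite hs eq_sym.
Qed.

Lemma numer_cons x w : numer (size w).+1 (x :: w) =
  if (0 < x)%N then sh (psmul (mono 0 (ed x w)) (numer (size w) w)) else zps.
Proof.
apply: functional_extensionality => a; apply: functional_extensionality => b.
rewrite -[(size w).+1]/(size (x :: w)) numer_val letters_pos_cons.
case: (0 < x)%N => //=.
rewrite /sh psmul_mono_l numer_val subn0 leq0n /=.
have [-> ->] := dc_stats x w; rewrite mono_shift.
by case: (letters_pos w); case: (b <= a)%N; case: (ed x w <= b)%N.
Qed.

Definition Rf : seq nat -> ps := fun w => RHSterm (size w) w.

Lemma R_Rec : Rec Rf.
Proof.
split.
  move=> a b; rewrite /Rf /RHSterm /ncscale /= denom_inv_0.
  have -> : numer 0 [::] = ps1.
    apply: functional_extensionality => a'; apply: functional_extensionality => b'.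
    by rewrite (numer_val [::]) /= maj_nil.
  by rewrite psmul_1_r /geom mul0n.
move=> x w a b.
have E : Rf (x :: w) = psmul (geom 0)
   (if (0 < x)%N then sh (psmul (mono 0 (ed x w)) (Rf w)) else zps).
  rewrite /Rf /RHSterm /ncscale [size _]/= denom_inv_S numer_cons.
  case: (0 < x)%N; last by rewrite !psmul_0_r.
  rewrite psmulA sh_mul; congr (psmul (geom 0) (sh _)).
  by rewrite -psmulA (psmulC (denom_inv _)) psmulA.
rewrite E psmul_geom0 -E; congr (_ + _).
case: (0 < x)%N => //=.
rewrite /sh psmul_mono_l leq0n subn0 /=.
by case: (b <= a)%N; case: (ed x w <= b)%N.
Qed.

Theorem lemma17 :
  exists Hs : nat -> ncs,
    (forall k, sums_to (Hterm k) (Hs k)) /\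
    exists S : ncs, sums_to (LHSterm Hs) S /\ sums_to RHSterm S.
Proof.
exists Hs; split.
  move=> k w a b; exists (size w).+1 => M hM.
  rewrite (sum_single_in hM) //.
  move=> n hn; rewrite /Hterm /ncscale /hser.
  have -> : (size w == n) = false by apply/negbTE; rewrite eq_sym.
  by rewrite /= -/zps psmul_0_r.
exists Sf; split.
  move=> w a b; exists b.+1 => M hM.
  rewrite (sum_single_in hM) /=.
    by rewrite /LHSterm /ncscale psmul_mono_l leqnn subn0 subnn.
  move=> n hn; rewrite /LHSterm /ncscale psmul_mono_l /=.
  case: (leqP n b) => hnb //=.
  by rewrite tz_prodH //; rewrite subn_gt0 ltn_neqAle hn hnb.
move=> w a b; exists (size w).+1 => M hM.
rewrite (sum_single_in hM) /=.
  by rewrite -[RHSterm _ w a b]/(Rf w a b) (Rec_uniq R_Rec S_Rec).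
move=> n hn; rewrite /RHSterm /ncscale.
have -> : numer n w = zps.
  apply: functional_extensionality => a'; apply: functional_extensionality => b'.
  exact: numer_zero.
by rewrite psmul_0_r.
Qed.
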